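(* Let $K_{c2}>0$ and let $K\mapsto\theta^*(K)$, $K\in(K_{c2},K_0)$, be a continuously differentiable family of stable phase-locked steady states of the Kuramoto network with coupling strength $K$. Let $\lambda_2(K)<0$ be the largest nonzero eigenvalue of the Jacobian $J(K)$ at $\theta^*(K)$ with a unit eigenvector $v_2(K)$. Suppose the phase-locked state loses stability at $K_{c2}$ in the sense that $\lambda_2(K)\to 0$ as $K\to K_{c2}^+$, and suppose $v_2\cdot\omega\neq 0$ in the limit, i.e. there is $c>0$ with $|v_2(K)\cdot\omega|\ge c$ for all $K$ near $K_{c2}$. Then $$\frac{d r_{\rm uni}(\theta^*(K))}{dK}\to+\infty\quad\text{as } K\to K_{c2}^+ .$$
   Context: Kuramoto network: $N\ge 2$ oscillators with phases $\theta_i(t)$ obeying $\frac{d\theta_i}{dt}=\omega_i+K\sum_{j=1}^N A_{i,j}\sin(\theta_j-\theta_i)$, where $\omega=(\omega_1,\dots,\omega_N)^T\in\mathbb{R}^N$ are natural frequencies with $\sum_{i=1}^N\omega_i=0$, $K>0$ is the coupling strength, and $A=(A_{i,j})$ is the symmetric adjacency matrix ($A_{i,j}=A_{j,i}\in\{0,1\}$, $A_{i,i}=0$) of a connected undirected graph; $k_i=\sum_j A_{i,j}$ is the degree of node $i$. A phase-locked steady state is a vector $\theta^*\in\mathbb{R}^N$ with $\omega_i+K\sum_j A_{i,j}\sin(\theta_j^*-\theta_i^* )=0$ for all $i$. Its Jacobian $J$ is the symmetric matrix with $J_{i,j}=KA_{i,j}\cos(\theta_i^*-\theta_j^* )$ for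 $i\neq j$ and $J_{i,i}=-K\sum_j A_{i,j}\cos(\theta_i^*-\theta_j^* )$; it always has eigenvalue $\lambda_1=0$ with eigenvector $(1,\dots,1)^T$. The state is called stable if all remaining eigenvalues $\lambda_2\ge\dots\ge\lambda_N$ of $J$ are strictly negative. $K_{c2}$ denotes the critical coupling at which the fully phase-locked state appears/loses stability (in a saddle-node bifurcation). The order parameter is $r_{\rm uni}=\frac{1}{\sum_i k_i}\sum_{i,j}A_{i,j}\langle\cos(\theta_i-\theta_j)\rangle_t$, which for a steady state equals $r_{\rm uni}(\theta^* )=\frac{1}{\sum_i k_i}\sum_{i,j}A_{i,j}\cos(\theta_i^*-\theta_j^* )$. *)

(* Defs.v *)
From Stdlib Require Import Reals Lra Lia.
Open Scope R_scope.

Fixpoint rsum (n : nat) (f : nat -> R) : R :=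
  match n with
  | O => 0
  | S m => rsum m f + f m
  end.

Definition adjacency (N : nat) (A : nat -> nat -> R) : Prop :=
  (forall i j, (i < N)%nat -> (j < N)%nat -> A i j = 0 \/ A i j = 1) /\
  (forall i j, (i < N)%nat -> (j < N)%nat -> A i j = A j i) /\
  (forall i, (i < N)%nat -> A i i = 0).

Inductive reachable (N : nat) (A : nat -> nat -> R) (i : nat) : nat -> Prop :=
  | reach_refl : reachable N A i i
  | reach_step : forall j k, reachable N A i j -> (k < N)%nat -> A j k = 1 ->
                   reachable N A i k.

Definition connected (N : nat) (A : nat -> nat -> R) : Prop :=
  forall i j, (i < N)%nat -> (j < N)%nat -> reachable N A i j.

Definition degree (N : nat) (A : nat -> nat -> R) (i : nat) : R :=
  rsum N (fun j => A i j).

Definition steady_state (N : nat) (A : nat -> nat -> R) (omega : nat -> R)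
  (K : R) (th : nat -> R) : Prop :=
  forall i, (i < N)%nat ->
    omega i + K * rsum N (fun j => A i j * sin (th j - th i)) = 0.

Definition jacobian (N : nat) (A : nat -> nat -> R) (K : R) (th : nat -> R)
  (i j : nat) : R :=
  if Nat.eqb i j then - K * rsum N (fun l => A i l * cos (th i - th l))
  else K * A i j * cos (th i - th j).

Definition eigenpair (N : nat) (M : nat -> nat -> R) (mu : R) (w : nat -> R) : Prop :=
  (exists i, (i < N)%nat /\ w i <> 0) /\
  (forall i, (i < N)%nat -> rsum N (fun j => M i j * w j) = mu * w i).

(* Stability: all eigenvalues other than the trivial lambda_1 = 0 (eigenvector
   (1,...,1)) are strictly negative.  Since J is symmetric, these "remaining"
   eigenvalues (with multiplicity) are exactly the eigenvalues of J restricted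
   to the invariant subspace orthogonal to (1,...,1). *)
Definition stable (N : nat) (A : nat -> nat -> R) (K : R) (th : nat -> R) : Prop :=
  forall mu w, eigenpair N (jacobian N A K th) mu w -> rsum N w = 0 -> mu < 0.

Definition dot (N : nat) (u v : nat -> R) : R := rsum N (fun i => u i * v i).

Definition r_uni (N : nat) (A : nat -> nat -> R) (th : nat -> R) : R :=
  rsum N (fun i => rsum N (fun j => A i j * cos (th i - th j)))
  / rsum N (fun i => degree N A i).

(* Main.v *)
Require Import Defs.
From Stdlib Require Import Reals Lra Lia Classical FunctionalExtensionality.
Open Scope R_scope.
From mathcomp Require ssreflect ssrfun ssrbool eqtype ssrnat seq choice fintype bigop ssralg matrix mxalgebra Rstruct.

Module LA.
Import ssreflect ssrfun ssrbool eqtype ssrnat seq choice fintype bigop ssralg matrix mxalgebra Rstruct.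
Import GRing.Theory.

Lemma rsum_big n (f : nat -> R) : rsum n f = (\sum_(i < n) f i)%R.
Proof.
elim: n => [|n IH] /=; first by rewrite big_ord0.
by rewrite big_ord_recr /= IH.
Qed.

Definition ext {n} (v : 'I_n -> R) (k : nat) : R :=
  (\sum_(l < n) (if val l == k then v l else 0))%R.

Lemma extE n (v : 'I_n -> R) (l : 'I_n) : ext v l = v l.
Proof.
rewrite /ext (bigD1 l) //= eqxx big1 ?GRing.addr0 // => m ml.
case: eqP => // /val_inj E; by rewrite E eqxx in ml.
Qed.

Lemma inj_inverse (N : nat) (P : nat -> nat -> R) :
  (forall x : nat -> R, (forall j, lt j N -> rsum N (fun i => x i * P i j) = 0) ->
     forall i, lt i N -> x i = 0) ->
  exists B : nat -> nat -> R, forall x : nat -> R, forall i, lt i N ->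
    x i = rsum N (fun j => rsum N (fun k => x k * P k j) * B j i).
Proof.
move=> Hinj.
pose A : 'M[R]_N := (\matrix_(i, j) P i j)%R.
have rf : row_free A.
  rewrite -kermx_eq0; apply/eqP/row_matrixP => i; rewrite row0.
  pose u := row i (kermx A).
  have uA : (u *m A = 0)%R by apply/sub_kermxP; exact: row_sub.
  apply/rowP => k; rewrite [RHS]mxE.
  have := Hinj (ext (fun l => u ord0 l)) _ k (ltP (ltn_ord k)).
  rewrite extE; apply.
  move=> j /ltP jN.
  rewrite rsum_big.
  apply: (@eq_trans _ _ ((u *m A)%R ord0 (Ordinal jN))); last by rewrite uA mxE.
  by rewrite mxE; apply: eq_bigr => l _; rewrite extE !mxE.
have uA : A \in unitmx by rewrite -row_free_unit.
exists (fun j i => ext (fun a => ext (fun b => invmx A a b) i) j).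
move=> x i /ltP iN.
pose xr : 'rV[R]_N := (\row_k x k)%R.
have := congr1 (fun M : 'rV[R]_N => M ord0 (Ordinal iN)) (mulmxK uA xr).
rewrite !mxE => <-.
rewrite rsum_big; apply: eq_bigr => j _.
rewrite extE !mxE rsum_big.
congr (_ * _)%R; last by rewrite (extE _ (fun b => invmx A j b) (Ordinal iN)).
by apply: eq_bigr => k _; rewrite !mxE.
Qed.

End LA.


Lemma rsum_ext n f g : (forall i, (i < n)%nat -> f i = g i) -> rsum n f = rsum n g.
Proof.
  induction n; intros H; simpl; [reflexivity|].
  rewrite IHn by (intros; apply H; lia). rewrite H by lia. reflexivity.
Qed.

Lemma rsum_plus n f g : rsum n (fun i => f i + g i) = rsum n f + rsum n g.
Proof. induction n; simpl; [lra|]. rewrite IHn. lra. Qed.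

Lemma rsum_minus n f g : rsum n (fun i => f i - g i) = rsum n f - rsum n g.
Proof. induction n; simpl; [lra|]. rewrite IHn. lra. Qed.

Lemma rsum_scal n c f : rsum n (fun i => c * f i) = c * rsum n f.
Proof. induction n; simpl; [lra|]. rewrite IHn. lra. Qed.

Lemma rsum_0 n : rsum n (fun _ => 0) = 0.
Proof. induction n; simpl; [lra|]. rewrite IHn. lra. Qed.

Lemma rsum_swap n m (f : nat -> nat -> R) :
  rsum n (fun i => rsum m (fun j => f i j)) = rsum m (fun j => rsum n (fun i => f i j)).
Proof.
  induction n; simpl.
  - rewrite rsum_0. reflexivity.
  - rewrite IHn. rewrite <- rsum_plus. reflexivity.
Qed.

Lemma rsum_nonneg n f : (forall i, (i < n)%nat -> 0 <= f i) -> 0 <= rsum n f.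
Proof.
  induction n; intros H; simpl; [lra|].
  assert (0 <= rsum n f) by (apply IHn; intros; apply H; lia).
  assert (0 <= f n) by (apply H; lia). lra.
Qed.

Lemma rsum_le n f g : (forall i, (i < n)%nat -> f i <= g i) -> rsum n f <= rsum n g.
Proof.
  induction n; intros H; simpl; [lra|].
  assert (rsum n f <= rsum n g) by (apply IHn; intros; apply H; lia).
  assert (f n <= g n) by (apply H; lia). lra.
Qed.

Lemma rsum_term n f i : (forall j, (j < n)%nat -> 0 <= f j) -> (i < n)%nat -> f i <= rsum n f.
Proof.
  induction n; intros H Hi; simpl; [lia|].
  assert (0 <= rsum n f) by (apply rsum_nonneg; intros; apply H; lia).
  destruct (Nat.eq_dec i n) as [->|Hne].
  - lra.
  - assert (f i <= rsum n f) by (apply IHn; [intros; apply H; lia | lia]).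
    assert (0 <= f n) by (apply H; lia). lra.
Qed.

Lemma rsum_zero_nonneg n f : (forall j, (j < n)%nat -> 0 <= f j) -> rsum n f = 0 ->
  forall i, (i < n)%nat -> f i = 0.
Proof.
  intros H H0 i Hi. pose proof (rsum_term n f i H Hi). pose proof (H i Hi). lra.
Qed.

Lemma rsum_delta n i f : (i < n)%nat ->
  rsum n (fun j => if Nat.eqb i j then f j else 0) = f i.
Proof.
  induction n; intros Hi; simpl; [lia|].
  destruct (Nat.eq_dec i n) as [->|Hne].
  - rewrite Nat.eqb_refl. rewrite (rsum_ext n _ (fun _ => 0)).
    + rewrite rsum_0. lra.
    + intros j Hj. destruct (Nat.eqb_spec n j); [lia|reflexivity].
  - rewrite IHn by lia. destruct (Nat.eqb_spec i n); [lia|lra].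
Qed.

Lemma rsum_abs n f : Rabs (rsum n f) <= rsum n (fun i => Rabs (f i)).
Proof.
  induction n; simpl. - rewrite Rabs_R0. lra.
  - eapply Rle_trans; [apply Rabs_triang|]. lra.
Qed.

Lemma discr a b c : 0 <= c -> (forall t, 0 <= a + 2 * b * t + c * t * t) -> b * b <= a * c.
Proof.
  intros Hc H.
  pose proof (H 0) as H0.
  destruct (Rle_lt_or_eq_dec 0 c Hc) as [Hc'|Hc'].
  - pose proof (H (- b / c)) as H1.
    replace (a + 2 * b * (- b / c) + c * (- b / c) * (- b / c)) with (a - b * b / c) in H1
      by (field; lra).
    assert (b * b / c <= a) by lra.
    apply (Rmult_le_compat_r c) in H2; [|lra].
    replace (b * b / c * c) with (b * b) in H2 by (field; lra). lra.
  - subst c. destruct (Req_dec b 0) as [->|Hb]; [nra|].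
    pose proof (H (- (a + 1) / (2 * b))) as H1.
    replace (a + 2 * b * (- (a + 1) / (2 * b)) + 0 * (- (a + 1) / (2 * b)) * (- (a + 1) / (2 * b)))
      with (-1) in H1 by (field; lra). lra.
Qed.

Lemma cauchy_schwarz n a b :
  rsum n (fun i => a i * b i) * rsum n (fun i => a i * b i)
  <= rsum n (fun i => a i * a i) * rsum n (fun i => b i * b i).
Proof.
  rewrite (Rmult_comm (rsum n (fun i => a i * a i))).
  apply discr.
  - apply rsum_nonneg. intros. nra.
  - intros t.
    assert (E : rsum n (fun i => (b i + t * a i) * (b i + t * a i)) =
      rsum n (fun i => b i * b i) + 2 * rsum n (fun i => a i * b i) * t
      + rsum n (fun i => a i * a i) * t * t).
    { induction n; simpl; [lra|]. rewrite IHn. ring. }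
    rewrite <- E. apply rsum_nonneg. intros. apply Rle_0_sqr.
Qed.


Definition mv N (M : nat -> nat -> R) (x : nat -> R) (i : nat) : R :=
  rsum N (fun j => M i j * x j).
Definition quad N M x := dot N x (mv N M x).
Definition symm N (M : nat -> nat -> R) :=
  forall i j, (i < N)%nat -> (j < N)%nat -> M i j = M j i.

Lemma rsum_const n k : rsum n (fun _ => k) = INR n * k.
Proof. induction n; simpl rsum; [simpl; lra|]. rewrite IHn, S_INR. lra. Qed.

Lemma dot_mv_sym N M x y : symm N M -> dot N x (mv N M y) = dot N (mv N M x) y.
Proof.
  intros Hs. unfold dot, mv.
  transitivity (rsum N (fun i => rsum N (fun j => x i * M i j * y j))).
  { apply rsum_ext; intros i Hi. rewrite <- rsum_scal. apply rsum_ext; intros; ring. }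
  rewrite rsum_swap.
  apply rsum_ext; intros j Hj. rewrite Rmult_comm, <- rsum_scal.
  apply rsum_ext; intros i Hi. rewrite (Hs i j Hi Hj). ring.
Qed.

Lemma dot_ext N u v u' v' : (forall i, (i < N)%nat -> u i = u' i) ->
  (forall i, (i < N)%nat -> v i = v' i) -> dot N u v = dot N u' v'.
Proof. intros H1 H2. unfold dot. apply rsum_ext; intros. rewrite H1, H2 by lia. reflexivity. Qed.

Lemma mv_ext N M x x' : (forall i, (i < N)%nat -> x i = x' i) ->
  forall i, mv N M x i = mv N M x' i.
Proof. intros H i. unfold mv. apply rsum_ext; intros. rewrite H by lia. reflexivity. Qed.

Lemma quad_ext N M x x' : (forall i, (i < N)%nat -> x i = x' i) -> quad N M x = quad N M x'.
Proof. intros H. unfold quad. apply dot_ext; auto. intros; apply mv_ext; auto. Qed.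

Lemma dot_nonneg N x : 0 <= dot N x x.
Proof. apply rsum_nonneg; intros; apply Rle_0_sqr. Qed.

Lemma dot_zero N x : dot N x x = 0 -> forall i, (i < N)%nat -> x i = 0.
Proof.
  intros H i Hi. pose proof (rsum_zero_nonneg N (fun i => x i * x i)
    (fun j _ => Rle_0_sqr (x j)) H i Hi). simpl in H0. nra.
Qed.

Lemma quad_zero N M x : (forall i, (i < N)%nat -> x i = 0) -> quad N M x = 0.
Proof.
  intros H. rewrite (quad_ext N M x (fun _ => 0) H). unfold quad, dot.
  rewrite (rsum_ext N _ (fun _ => 0)); [apply rsum_0|]. intros; ring.
Qed.

Lemma quad_lin N M x y t : symm N M ->
  quad N M (fun i => x i + t * y i) =
  quad N M x + 2 * dot N x (mv N M y) * t + quad N M y * t * t.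
Proof.
  intros Hs.
  assert (Hm : forall i, mv N M (fun i => x i + t * y i) i = mv N M x i + t * mv N M y i).
  { intros i. unfold mv. rewrite <- rsum_scal, <- rsum_plus. apply rsum_ext; intros; ring. }
  unfold quad. unfold dot at 1.
  rewrite (rsum_ext N _ (fun i => x i * mv N M x i + t * (x i * mv N M y i)
      + t * t * (y i * mv N M y i) + t * (y i * mv N M x i))).
  2:{ intros i _. rewrite Hm. ring. }
  rewrite !rsum_plus, !rsum_scal.
  fold (dot N x (mv N M x)). fold (dot N x (mv N M y)). fold (dot N y (mv N M y)).
  fold (dot N y (mv N M x)). rewrite (dot_mv_sym N M y x Hs).
  replace (dot N (mv N M y) x) with (dot N x (mv N M y)) by (unfold dot; apply rsum_ext; intros; ring).
  ring.
Qed.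

Lemma psd_cs N M x y : symm N M -> (forall z, 0 <= quad N M z) ->
  dot N x (mv N M y) * dot N x (mv N M y) <= quad N M x * quad N M y.
Proof.
  intros Hs Hp. apply discr; [apply Hp|].
  intros t. rewrite <- quad_lin by auto. apply Hp.
Qed.

Definition Lnorm N (M : nat -> nat -> R) := rsum N (fun i => rsum N (fun j => Rabs (M i j))).

Lemma Lnorm_nonneg N M : 0 <= Lnorm N M.
Proof. apply rsum_nonneg; intros; apply rsum_nonneg; intros; apply Rabs_pos. Qed.

Lemma quad_bound N M x : Rabs (quad N M x) <= Lnorm N M * dot N x x.
Proof.
  unfold quad, Lnorm. eapply Rle_trans; [apply rsum_abs|].
  rewrite Rmult_comm, <- rsum_scal. apply rsum_le; intros i Hi.
  unfold mv. rewrite Rabs_mult.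
  eapply Rle_trans.
  { apply (Rmult_le_compat_l (Rabs (x i))); [apply Rabs_pos|apply rsum_abs]. }
  rewrite <- !rsum_scal. apply rsum_le; intros j Hj.
  rewrite Rabs_mult.
  assert (Hi2 : x i * x i <= dot N x x)
    by (apply (rsum_term N (fun k => x k * x k)); [intros; apply Rle_0_sqr|auto]).
  assert (Hj2 : x j * x j <= dot N x x)
    by (apply (rsum_term N (fun k => x k * x k)); [intros; apply Rle_0_sqr|auto]).
  assert (Hxy : Rabs (x i) * Rabs (x j) <= dot N x x).
  { assert (Rabs (x i) * Rabs (x i) = x i * x i) by (rewrite <- Rabs_mult; apply Rabs_right; nra).
    assert (Rabs (x j) * Rabs (x j) = x j * x j) by (rewrite <- Rabs_mult; apply Rabs_right; nra).
    pose proof (Rabs_pos (x i)). pose proof (Rabs_pos (x j)). nra. }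
  pose proof (Rabs_pos (M i j)). nra.
Qed.


Lemma colsum_zero N J : symm N J -> (forall i, (i < N)%nat -> rsum N (fun j => J i j) = 0) ->
  forall y, rsum N (fun i => mv N J y i) = 0.
Proof.
  intros Hs Hr y. unfold mv. rewrite rsum_swap.
  rewrite (rsum_ext N _ (fun _ => 0)); [apply rsum_0|].
  intros j Hj. rewrite (rsum_ext N _ (fun i => y j * J j i)).
  - rewrite rsum_scal, Hr by auto. ring.
  - intros i Hi. rewrite (Hs i j Hi Hj). ring.
Qed.

Lemma decomp N x : (0 < N)%nat -> exists u c, rsum N u = 0 /\ forall i, x i = u i + c.
Proof.
  intros HN. set (c := rsum N x / INR N). exists (fun i => x i - c), c. split.
  - rewrite rsum_minus, rsum_const. unfold c. field.
    apply not_0_INR. lia.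
  - intros; ring.
Qed.

Lemma quad_shift N J u c : symm N J -> (forall i, (i < N)%nat -> rsum N (fun j => J i j) = 0) ->
  quad N J (fun i => u i + c) = quad N J u.
Proof.
  intros Hs Hr.
  assert (Hm : forall i, (i < N)%nat -> mv N J (fun i => u i + c) i = mv N J u i).
  { intros i Hi. unfold mv. rewrite (rsum_ext N _ (fun j => J i j * u j + c * J i j)).
    - rewrite rsum_plus, rsum_scal, Hr by auto. ring.
    - intros; ring. }
  unfold quad. rewrite (dot_ext N _ _ (fun i => u i + c) (mv N J u)); auto.
  unfold dot. rewrite (rsum_ext N _ (fun i => u i * mv N J u i + c * mv N J u i)) by (intros; ring).
  rewrite rsum_plus, rsum_scal, (colsum_zero N J Hs Hr). ring.
Qed.

Lemma dot_shift N u c : rsum N u = 0 -> dot N (fun i => u i + c) (fun i => u i + c) =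
  dot N u u + c * c * INR N.
Proof.
  intros H. unfold dot.
  rewrite (rsum_ext N _ (fun i => u i * u i + (2 * c) * u i + c * c)) by (intros; ring).
  rewrite !rsum_plus, rsum_scal, H, rsum_const. ring.
Qed.

Lemma mv_P N J mu y i : (i < N)%nat ->
  mv N (fun i j => (if Nat.eqb i j then mu else 0) - J i j) y i = mu * y i - mv N J y i.
Proof.
  intros Hi. unfold mv.
  rewrite (rsum_ext N _ (fun j => (if Nat.eqb i j then mu * y j else 0) - J i j * y j)).
  - rewrite rsum_minus, rsum_delta by auto. reflexivity.
  - intros j _. destruct (Nat.eqb i j); ring.
Qed.

Lemma nsd N J : symm N J -> (forall i, (i < N)%nat -> rsum N (fun j => J i j) = 0) ->
  (forall mu w, eigenpair N J mu w -> rsum N w = 0 -> mu < 0) ->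
  forall x, quad N J x <= 0.
Proof.
  intros Hs Hr Hst x.
  destruct (Nat.eq_dec N 0) as [->|HN].
  { unfold quad, dot. simpl. lra. }
  assert (HN' : (0 < N)%nat) by lia.
  destruct (Rle_or_lt (quad N J x) 0) as [|Hpos]; [assumption|exfalso].
  destruct (decomp N x HN') as [u0 [c0 [Hu0 Hx0]]].
  assert (Hxeq : x = fun i => u0 i + c0) by (apply functional_extensionality; auto).
  rewrite Hxeq, quad_shift in Hpos by auto.
  assert (Hd0 : 0 < dot N u0 u0).
  { destruct (Rle_lt_or_eq_dec 0 _ (dot_nonneg N u0)) as [|He]; auto.
    rewrite (quad_zero N J u0) in Hpos; [lra|]. apply dot_zero; auto. }
  set (E := fun r => exists u, rsum N u = 0 /\ 0 < dot N u u /\ r = quad N J u / dot N u u).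
  set (L := Lnorm N J).
  assert (HL : forall u, Rabs (quad N J u) <= L * dot N u u) by (intros; apply quad_bound).
  assert (HL0 : 0 <= L) by apply Lnorm_nonneg.
  assert (Hb : bound E).
  { exists L. intros r [u [_ [Hd ->]]]. pose proof (HL u).
    apply Rmult_le_reg_r with (dot N u u); auto.
    unfold Rdiv. rewrite Rmult_assoc, Rinv_l by lra.
    pose proof (Rle_abs (quad N J u)). lra. }
  assert (Hne : exists r, E r) by (exists (quad N J u0 / dot N u0 u0); exists u0; auto).
  destruct (completeness E Hb Hne) as [mu [Hub Hlub]].
  assert (Hmu : 0 < mu).
  { apply Rlt_le_trans with (quad N J u0 / dot N u0 u0).
    - apply Rdiv_lt_0_compat; auto.
    - apply Hub. exists u0; auto. }
  assert (Hkey : forall u, rsum N u = 0 -> quad N J u <= mu * dot N u u).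
  { intros u Hu. destruct (Rle_lt_or_eq_dec 0 _ (dot_nonneg N u)) as [Hd|Hd].
    - assert (quad N J u / dot N u u <= mu) by (apply Hub; exists u; auto).
      apply Rmult_le_reg_r with (/ dot N u u). { apply Rinv_0_lt_compat; auto. }
      rewrite Rmult_assoc, Rinv_r by lra. rewrite Rmult_1_r. exact H.
    - rewrite (quad_zero N J u); [rewrite <- Hd; lra|]. apply dot_zero; auto. }
  set (P := fun i j => (if Nat.eqb i j then mu else 0) - J i j).
  assert (HsP : symm N P).
  { intros i j Hi Hj. unfold P. rewrite Nat.eqb_sym, (Hs i j Hi Hj). reflexivity. }
  assert (HqP : forall y, quad N P y = mu * dot N y y - quad N J y).
  { intros y. unfold quad. rewrite (dot_ext N y (mv N P y) y (fun i => mu * y i - mv N J y i)).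
    - unfold dot. rewrite (rsum_ext N _ (fun i => mu * (y i * y i) - y i * mv N J y i)) by (intros; ring).
      rewrite rsum_minus, rsum_scal. reflexivity.
    - auto.
    - intros; apply mv_P; auto. }
  assert (Hpsd : forall y, 0 <= quad N P y).
  { intros y. rewrite HqP. destruct (decomp N y HN') as [u [c [Hu Hy]]].
    assert (Hyeq : y = fun i => u i + c) by (apply functional_extensionality; auto).
    rewrite Hyeq, quad_shift, dot_shift by auto.
    pose proof (Hkey u Hu). pose proof (pos_INR N).
    assert (0 <= c * c) by apply Rle_0_sqr.
    assert (0 <= mu * (c * c * INR N)) by (apply Rmult_le_pos; [lra|apply Rmult_le_pos; lra]).
    lra. }
  destruct (classic (exists w, (forall j, (j < N)%nat -> rsum N (fun i => w i * P i j) = 0)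
                      /\ exists i, (i < N)%nat /\ w i <> 0)) as [[w [Hw Hwnz]]|Hinj].
  - assert (Heig : forall i, (i < N)%nat -> rsum N (fun j => J i j * w j) = mu * w i).
    { intros i Hi. pose proof (Hw i Hi) as H.
      rewrite (rsum_ext N _ (fun k => (if Nat.eqb i k then mu * w k else 0) - J i k * w k)) in H.
      - rewrite rsum_minus, rsum_delta in H by auto. lra.
      - intros k Hk. unfold P. rewrite (Hs i k Hi Hk), (Nat.eqb_sym k i).
        destruct (Nat.eqb i k); ring. }
    assert (Hsw : rsum N w = 0).
    { pose proof (colsum_zero N J Hs Hr w) as H. unfold mv in H.
      rewrite (rsum_ext N _ (fun i => mu * w i)) in H by auto.
      rewrite rsum_scal in H. apply Rmult_integral in H. destruct H; [lra|auto]. }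
    pose proof (Hst mu w (conj Hwnz Heig) Hsw). lra.
  - assert (Hinj' : forall x : nat -> R, (forall j, lt j N -> rsum N (fun i => x i * P i j) = 0) ->
       forall i, lt i N -> x i = 0).
    { intros y Hy i Hi. apply NNPP. intros Hyi. apply Hinj. exists y. split; eauto. }
    destruct (LA.inj_inverse N P Hinj') as [B HB].
    set (C := rsum N (fun i => rsum N (fun j => B j i * B j i)) + 1).
    assert (HC : 0 < C).
    { unfold C. assert (0 <= rsum N (fun i => rsum N (fun j => B j i * B j i))); [|lra].
      apply rsum_nonneg; intros; apply rsum_nonneg; intros; apply Rle_0_sqr. }
    assert (Hbelow : forall y, dot N y y <= C * dot N (mv N P y) (mv N P y)).
    { intros y.
      assert (Hy : forall i, (i < N)%nat -> y i = rsum N (fun j => mv N P y j * B j i)).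
      { intros i Hi. rewrite (HB y i Hi). apply rsum_ext; intros j Hj. f_equal.
        unfold mv. apply rsum_ext; intros k Hk. rewrite (HsP j k Hj Hk). ring. }
      apply Rle_trans with (dot N (mv N P y) (mv N P y) * rsum N (fun i => rsum N (fun j => B j i * B j i))).
      - rewrite <- rsum_scal. apply rsum_le; intros i Hi. rewrite (Hy i Hi).
        apply cauchy_schwarz.
      - unfold C. pose proof (dot_nonneg N (mv N P y)). nra. }
    set (Lp := mu + L + 1).
    assert (HLp : forall z, quad N P z <= Lp * dot N z z).
    { intros z. rewrite HqP. pose proof (HL z).
      pose proof (dot_nonneg N z) as Hdz. pose proof (Rle_abs (- quad N J z)) as Hab.
      rewrite Rabs_Ropp in Hab. unfold Lp. nra. }
    assert (HLp0 : 0 < Lp) by (unfold Lp; lra).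
    assert (Hcoer : forall y, dot N y y <= C * Lp * quad N P y).
    { intros y. set (z := mv N P y).
      pose proof (psd_cs N P y z HsP Hpsd) as Hcs.
      rewrite (dot_mv_sym N P y z HsP) in Hcs. fold z in Hcs.
      pose proof (HLp z). pose proof (Hpsd y). pose proof (Hpsd z).
      pose proof (dot_nonneg N z).
      assert (Hz : dot N z z <= Lp * quad N P y).
      { destruct (Rle_lt_or_eq_dec 0 _ (dot_nonneg N z)) as [Hd|Hd].
        - apply Rmult_le_reg_r with (dot N z z); auto.
          apply Rle_trans with (quad N P y * quad N P z); [exact Hcs|].
          nra.
        - rewrite <- Hd. nra. }
      pose proof (Hbelow y). fold z in H3. nra. }
    assert (Hub' : is_upper_bound E (mu - / (C * Lp))).
    { intros r [u [Hu [Hd ->]]].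
      pose proof (Hcoer u). rewrite HqP in H.
      assert (HCL : 0 < C * Lp) by (apply Rmult_lt_0_compat; auto).
      apply Rmult_le_reg_r with (dot N u u); auto.
      unfold Rdiv. rewrite Rmult_assoc, Rinv_l by lra. rewrite Rmult_1_r.
      apply Rmult_le_reg_l with (C * Lp); auto.
      replace (C * Lp * ((mu - / (C * Lp)) * dot N u u)) with (C * Lp * mu * dot N u u - dot N u u) by (field; lra).
      nra. }
    pose proof (Hlub _ Hub').
    assert (0 < / (C * Lp)) by (apply Rinv_0_lt_compat, Rmult_lt_0_compat; auto).
    lra.
Qed.


Lemma deriv_ext f g x l : (forall y, f y = g y) -> derivable_pt_lim f x l -> derivable_pt_lim g x l.
Proof.
  intros H Hf. replace g with f; auto. apply functional_extensionality; auto.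
Qed.

Lemma rsum_deriv n (f : nat -> R -> R) (df : nat -> R) x :
  (forall i, (i < n)%nat -> derivable_pt_lim (f i) x (df i)) ->
  derivable_pt_lim (fun k => rsum n (fun i => f i k)) x (rsum n df).
Proof.
  induction n; intros H; simpl.
  - apply derivable_pt_lim_const.
  - apply (derivable_pt_lim_plus (fun k => rsum n (fun i => f i k)) (f n)).
    + apply IHn. intros; apply H; lia.
    + apply H; lia.
Qed.

Lemma d_scal c f x l : derivable_pt_lim f x l -> derivable_pt_lim (fun k => c * f k) x (c * l).
Proof. intros H. apply (derivable_pt_lim_scal f c x l H). Qed.

Lemma d_sin_diff f g x lf lg : derivable_pt_lim f x lf -> derivable_pt_lim g x lg ->
  derivable_pt_lim (fun k => sin (f k - g k)) x (cos (f x - g x) * (lf - lg)).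
Proof.
  intros Hf Hg.
  apply (derivable_pt_lim_comp (fun k => f k - g k) sin x (lf - lg) (cos (f x - g x))).
  - apply (derivable_pt_lim_minus f g x lf lg Hf Hg).
  - apply derivable_pt_lim_sin.
Qed.

Lemma d_cos_diff f g x lf lg : derivable_pt_lim f x lf -> derivable_pt_lim g x lg ->
  derivable_pt_lim (fun k => cos (f k - g k)) x (- sin (f x - g x) * (lf - lg)).
Proof.
  intros Hf Hg.
  apply (derivable_pt_lim_comp (fun k => f k - g k) cos x (lf - lg) (- sin (f x - g x))).
  - apply (derivable_pt_lim_minus f g x lf lg Hf Hg).
  - apply derivable_pt_lim_cos.
Qed.

Lemma loc_zero f x l a b : derivable_pt_lim f x l -> a < x < b ->
  (forall y, a < y < b -> f y = 0) -> l = 0.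
Proof.
  intros Hd Hx Hz. apply NNPP; intros Hl.
  assert (He : 0 < Rabs l) by (apply Rabs_pos_lt; auto).
  destruct (Hd (Rabs l) He) as [d Hdd].
  set (h := Rmin (d / 2) (Rmin ((b - x) / 2) ((x - a) / 2))).
  assert (Hd0 : 0 < d) by (destruct d; simpl; auto).
  assert (Hh : 0 < h) by (unfold h; repeat apply Rmin_pos; lra).
  assert (Hh1 : h <= d / 2) by apply Rmin_l.
  assert (Hh2 : h <= (b - x) / 2) by (eapply Rle_trans; [apply Rmin_r|apply Rmin_l]).
  specialize (Hdd h (Rgt_not_eq _ _ Hh)).
  rewrite Rabs_pos_eq in Hdd by lra.
  specialize (Hdd ltac:(lra)).
  rewrite (Hz (x + h)) in Hdd by lra. rewrite (Hz x) in Hdd by lra.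
  replace ((0 - 0) / h - l) with (- l) in Hdd by (field; lra).
  rewrite Rabs_Ropp in Hdd. lra.
Qed.

Lemma steady_deriv N A omega (theta dtheta : R -> nat -> R) a b K i :
  a < K < b -> (i < N)%nat ->
  (forall j, (j < N)%nat -> derivable_pt_lim (fun k => theta k j) K (dtheta K j)) ->
  (forall k, a < k < b -> steady_state N A omega k (theta k)) ->
  rsum N (fun j => A i j * sin (theta K j - theta K i)) +
  K * rsum N (fun j => A i j * (cos (theta K j - theta K i) * (dtheta K j - dtheta K i))) = 0.
Proof.
  intros HK Hi Hd Hs.
  assert (H : derivable_pt_lim
    (fun k => omega i + k * rsum N (fun j => A i j * sin (theta k j - theta k i))) K
    (0 + (1 * rsum N (fun j => A i j * sin (theta K j - theta K i)) +
     K * rsum N (fun j => A i j * (cos (theta K j - theta K i) * (dtheta K j - dtheta K i)))))).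
  { apply (derivable_pt_lim_plus (fun _ => omega i)
       (fun k => k * rsum N (fun j => A i j * sin (theta k j - theta k i)))).
    - apply derivable_pt_lim_const.
    - apply (derivable_pt_lim_mult (fun k => k)
         (fun k => rsum N (fun j => A i j * sin (theta k j - theta k i)))).
      + apply derivable_pt_lim_id.
      + apply (rsum_deriv N (fun j k => A i j * sin (theta k j - theta k i))).
        intros j Hj. apply d_scal. apply d_sin_diff; auto. }
  pose proof (loc_zero _ _ _ a b H HK) as H0.
  assert (H1 : 0 + (1 * rsum N (fun j => A i j * sin (theta K j - theta K i)) +
     K * rsum N (fun j => A i j * (cos (theta K j - theta K i) * (dtheta K j - dtheta K i)))) = 0).
  { apply H0. intros y Hy. apply (Hs y Hy i Hi). }
  lra.
Qed.

Lemma cos_swap a b : cos (a - b) = cos (b - a).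
Proof. rewrite <- cos_neg. f_equal. ring. Qed.

Lemma jac_mv N A K th y i : adjacency N A -> (i < N)%nat ->
  mv N (jacobian N A K th) y i = K * rsum N (fun j => A i j * (cos (th j - th i) * (y j - y i))).
Proof.
  intros [H01 [Hsym Hdiag]] Hi. unfold mv, jacobian.
  rewrite (rsum_ext N _ (fun j => (if Nat.eqb i j then
       (- K * rsum N (fun l => A i l * cos (th i - th l))) * y j else 0)
       + K * (A i j * cos (th i - th j) * y j))).
  2:{ intros j Hj. destruct (Nat.eqb_spec i j).
      - subst j. rewrite (Hdiag i Hi). ring.
      - ring. }
  rewrite rsum_plus, rsum_delta, rsum_scal by auto.
  rewrite (rsum_ext N (fun j => A i j * (cos (th j - th i) * (y j - y i)))
     (fun j => A i j * cos (th i - th j) * y j - y i * (A i j * cos (th i - th j)))).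
  - rewrite rsum_minus, rsum_scal. ring.
  - intros j Hj. rewrite (cos_swap (th j)). ring.
Qed.


Lemma sin_anti a b : sin (a - b) = - sin (b - a).
Proof. rewrite <- sin_neg. f_equal. ring. Qed.

Lemma key_K N A omega K th dth lam v :
  adjacency N A -> 0 < K -> steady_state N A omega K th -> stable N A K th ->
  (forall i, (i < N)%nat -> rsum N (fun j => A i j * sin (th j - th i)) +
      K * rsum N (fun j => A i j * (cos (th j - th i) * (dth j - dth i))) = 0) ->
  eigenpair N (jacobian N A K th) lam v -> dot N v v = 1 ->
  dot N v omega * dot N v omega <=
  K * K * (- lam) * (rsum N (fun i => rsum N (fun j =>
      A i j * (- sin (th i - th j) * (dth i - dth j)))) / 2).
Proof.
  intros HA HK Hst Hstab Hsd [_ Heig] Hv.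
  pose proof HA as [H01 [Hsym Hdiag]].
  set (J := jacobian N A K th).
  assert (HsJ : symm N J).
  { intros i j Hi Hj. unfold J, jacobian. destruct (Nat.eqb_spec i j).
    - subst; rewrite Nat.eqb_refl; reflexivity.
    - destruct (Nat.eqb_spec j i); [lia|]. rewrite (Hsym i j Hi Hj), cos_swap. reflexivity. }
  assert (Hrow : forall i, (i < N)%nat -> rsum N (fun j => J i j) = 0).
  { intros i Hi. pose proof (jac_mv N A K th (fun _ => 1) i HA Hi) as H.
    unfold mv in H. rewrite (rsum_ext N (fun j => jacobian N A K th i j * 1) (fun j => jacobian N A K th i j)) in H
      by (intros; ring).
    unfold J. rewrite H. rewrite (rsum_ext N _ (fun _ => 0)) by (intros; ring).
    rewrite rsum_0. ring. }
  assert (HSi : forall i, (i < N)%nat -> rsum N (fun j => A i j * sin (th j - th i)) = - omega i / K).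
  { intros i Hi. pose proof (Hst i Hi) as H. set (S := rsum N (fun j => A i j * sin (th j - th i))) in *.
    replace (omega i) with (- K * S) by lra. field. lra. }
  assert (Hmv : forall i, (i < N)%nat -> mv N J dth i = omega i / K).
  { intros i Hi. unfold J. rewrite jac_mv by auto. pose proof (Hsd i Hi). pose proof (HSi i Hi).
    lra. }
  assert (Hnsd : forall z, quad N J z <= 0) by (apply nsd; auto).
  set (P := fun i j => - J i j).
  assert (HsP : symm N P) by (intros i j Hi Hj; unfold P; rewrite HsJ; auto).
  assert (HmvP : forall y i, mv N P y i = - mv N J y i).
  { intros y i. unfold mv, P. rewrite <- (Rmult_1_l (rsum N (fun j => J i j * y j))).
    rewrite Ropp_mult_distr_l, <- rsum_scal. apply rsum_ext; intros; ring. }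
  assert (HqP : forall z, quad N P z = - quad N J z).
  { intros z. unfold quad. rewrite (dot_ext N z (mv N P z) z (fun i => - mv N J z i)); auto.
    unfold dot. rewrite <- (Rmult_1_l (rsum N (fun i => z i * mv N J z i))).
    rewrite Ropp_mult_distr_l, <- rsum_scal. apply rsum_ext; intros; ring. }
  assert (Hpsd : forall z, 0 <= quad N P z) by (intros; rewrite HqP; pose proof (Hnsd z); lra).
  pose proof (psd_cs N P v dth HsP Hpsd) as Hcs.
  assert (E1 : dot N v (mv N P dth) = - dot N v omega / K).
  { rewrite (dot_ext N v (mv N P dth) v (fun i => (- / K) * omega i)); auto.
    - unfold dot. rewrite (rsum_ext N _ (fun i => (- / K) * (v i * omega i))) by (intros; ring).
      rewrite rsum_scal. field. lra.
    - intros i Hi. rewrite HmvP, Hmv by auto. field. lra. }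
  assert (E2 : quad N P v = - lam).
  { rewrite HqP. unfold quad. rewrite (dot_ext N v (mv N J v) v (fun i => lam * v i)); auto.
    - unfold dot. rewrite (rsum_ext N _ (fun i => lam * (v i * v i))) by (intros; ring).
      rewrite rsum_scal. fold (dot N v v). rewrite Hv. ring. }
  assert (E3 : quad N J dth = / K * rsum N (fun i => dth i * omega i)).
  { unfold quad. rewrite (dot_ext N dth (mv N J dth) dth (fun i => omega i / K)); auto.
    unfold dot. rewrite <- rsum_scal. apply rsum_ext; intros. field. lra. }
  assert (E4 : rsum N (fun i => rsum N (fun j => A i j * (- sin (th i - th j) * (dth i - dth j))))
               = - 2 * quad N J dth).
  { rewrite (rsum_ext N _ (fun i => dth i * rsum N (fun j => A i j * sin (th j - th i))
        - rsum N (fun j => A i j * sin (th j - th i) * dth j))).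
    2:{ intros i Hi. rewrite <- rsum_scal, <- rsum_minus. apply rsum_ext; intros j Hj.
        rewrite (sin_anti (th i)). ring. }
    rewrite rsum_minus, rsum_swap.
    rewrite (rsum_ext N (fun j => rsum N (fun i => A i j * sin (th j - th i) * dth j))
       (fun j => dth j * (omega j / K))).
    2:{ intros j Hj. rewrite (rsum_ext N _ (fun i => (- dth j) * (A j i * sin (th i - th j)))).
        - rewrite rsum_scal, HSi by auto. field. lra.
        - intros i Hi. rewrite (Hsym i j Hi Hj), (sin_anti (th j)). ring. }
    rewrite (rsum_ext N (fun i => dth i * rsum N (fun j => A i j * sin (th j - th i)))
       (fun i => - / K * (dth i * omega i))).
    2:{ intros i Hi. rewrite HSi by auto. field. lra. }
    rewrite (rsum_ext N (fun j => dth j * (omega j / K)) (fun i => / K * (dth i * omega i)))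
      by (intros; field; lra).
    rewrite !rsum_scal, E3. ring. }
  rewrite E4. rewrite E1, E2, HqP in Hcs.
  assert (HK2 : 0 < K * K) by nra.
  replace (- dot N v omega / K * (- dot N v omega / K)) with
    (dot N v omega * dot N v omega / (K * K)) in Hcs by (field; lra).
  apply Rmult_le_compat_l with (r := K * K) in Hcs; [|lra].
  replace (K * K * (dot N v omega * dot N v omega / (K * K))) with (dot N v omega * dot N v omega)
    in Hcs by (field; lra).
  replace (K * K * - lam * (- 2 * quad N J dth / 2)) with (K * K * (- lam * - quad N J dth)) by field.
  exact Hcs.
Qed.


Lemma reach_edge N A i k : reachable N A i k -> (i < N)%nat ->
  k = i \/ exists j, (j < N)%nat /\ (k < N)%nat /\ A j k = 1.
Proof.
  intros H Hi. induction H as [|j k Hr IH Hk Ha].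
  - left; reflexivity.
  - right. destruct IH as [->|[j' [Hj' [Hj Ha']]]].
    + exists i; auto.
    + exists j; auto.
Qed.

Lemma D_pos N A : (2 <= N)%nat -> adjacency N A -> connected N A ->
  0 < rsum N (fun i => degree N A i).
Proof.
  intros HN HA Hc. destruct HA as [H01 [Hs Hd]].
  destruct (reach_edge N A 0 1 (Hc 0%nat 1%nat ltac:(lia) ltac:(lia)) ltac:(lia))
    as [H|[j [Hj [H1 Ha]]]]; [discriminate|].
  assert (Hnn : forall i l, (i < N)%nat -> (l < N)%nat -> 0 <= A i l)
    by (intros i l Hi Hl; destruct (H01 i l Hi Hl) as [->| ->]; lra).
  assert (Hdeg : forall i, (i < N)%nat -> 0 <= degree N A i)
    by (intros; apply rsum_nonneg; intros; apply Hnn; auto).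
  assert (A j 1%nat <= degree N A j)
    by (apply (rsum_term N (fun l => A j l)); auto).
  assert (degree N A j <= rsum N (fun i => degree N A i))
    by (apply (rsum_term N (fun i => degree N A i)); auto).
  lra.
Qed.

Lemma r_deriv N A (theta dtheta : R -> nat -> R) K :
  (forall i, (i < N)%nat -> derivable_pt_lim (fun k => theta k i) K (dtheta K i)) ->
  derivable_pt_lim (fun k => r_uni N A (theta k)) K
    (/ rsum N (fun i => degree N A i) *
     rsum N (fun i => rsum N (fun j =>
        A i j * (- sin (theta K i - theta K j) * (dtheta K i - dtheta K j))))).
Proof.
  intros Hd.
  apply deriv_ext with (f := fun k => / rsum N (fun i => degree N A i) *
      rsum N (fun i => rsum N (fun j => A i j * cos (theta k i - theta k j)))).
  { intros y. unfold r_uni, Rdiv. ring. }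
  apply d_scal.
  apply (rsum_deriv N (fun i k => rsum N (fun j => A i j * cos (theta k i - theta k j)))).
  intros i Hi.
  apply (rsum_deriv N (fun j k => A i j * cos (theta k i - theta k j))).
  intros j Hj. apply d_scal. apply d_cos_diff; auto.
Qed.

Theorem theorem1
  (N : nat) (A : nat -> nat -> R) (omega : nat -> R)
  (Kc2 K0 : R) (theta dtheta : R -> nat -> R)
  (lambda2 : R -> R) (v2 : R -> nat -> R)
  (HN : (2 <= N)%nat)
  (HA : adjacency N A) (Hconn : connected N A)
  (Homega : rsum N omega = 0)
  (HKc2 : 0 < Kc2) (HK0 : Kc2 < K0)
  (* continuously differentiable family *)
  (Hdiff : forall K i, Kc2 < K < K0 -> (i < N)%nat ->
             derivable_pt_lim (fun k => theta k i) K (dtheta K i))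
  (Hcont : forall K i, Kc2 < K < K0 -> (i < N)%nat ->
             continuity_pt (fun k => dtheta k i) K)
  (* stable phase-locked steady states *)
  (Hsteady : forall K, Kc2 < K < K0 -> steady_state N A omega K (theta K))
  (Hstable : forall K, Kc2 < K < K0 -> stable N A K (theta K))
  (* lambda2(K) < 0 is the largest nonzero eigenvalue, with unit eigenvector v2(K) *)
  (Hl2neg : forall K, Kc2 < K < K0 -> lambda2 K < 0)
  (Hl2eig : forall K, Kc2 < K < K0 ->
             eigenpair N (jacobian N A K (theta K)) (lambda2 K) (v2 K))
  (Hv2unit : forall K, Kc2 < K < K0 -> dot N (v2 K) (v2 K) = 1)
  (Hl2max : forall K, Kc2 < K < K0 -> forall mu w,
             eigenpair N (jacobian N A K (theta K)) mu w -> mu <> 0 ->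
             mu <= lambda2 K)
  (* loss of stability at Kc2 *)
  (Hl2lim : forall eps, 0 < eps -> exists delta, 0 < delta /\
             forall K, Kc2 < K < K0 -> K < Kc2 + delta -> Rabs (lambda2 K) < eps)
  (* v2 . omega stays away from 0 near Kc2 *)
  (Hv2om : exists c delta, 0 < c /\ 0 < delta /\
             forall K, Kc2 < K < K0 -> K < Kc2 + delta ->
               c <= Rabs (dot N (v2 K) omega)) :
  forall M, exists delta, 0 < delta /\
    forall K, Kc2 < K < K0 -> K < Kc2 + delta ->
      exists l, derivable_pt_lim (fun k => r_uni N A (theta k)) K l /\ M <= l.
Proof.
  intros M.
  destruct Hv2om as [c [d1 [Hc [Hd1 Hv]]]].
  set (D := rsum N (fun i => degree N A i)).
  assert (HD : 0 < D) by (apply D_pos; auto).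
  set (B := (Kc2 + 1) * (Kc2 + 1)).
  assert (HB : 0 < B) by (unfold B; nra).
  set (eps := 2 * (c * c) / (B * D * (Rabs M + 1))).
  assert (Heps : 0 < eps).
  { unfold eps. pose proof (Rabs_pos M). apply Rdiv_lt_0_compat; [nra|].
    apply Rmult_lt_0_compat; [apply Rmult_lt_0_compat|]; lra. }
  destruct (Hl2lim eps Heps) as [d2 [Hd2 Hl]].
  exists (Rmin d1 (Rmin d2 1)). split.
  { repeat apply Rmin_pos; lra. }
  intros K HK HKd.
  assert (HKd1 : K < Kc2 + d1) by (pose proof (Rmin_l d1 (Rmin d2 1)); lra).
  assert (HKd2 : K < Kc2 + d2)
    by (pose proof (Rmin_r d1 (Rmin d2 1)); pose proof (Rmin_l d2 1); lra).
  assert (HKd3 : K < Kc2 + 1)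
    by (pose proof (Rmin_r d1 (Rmin d2 1)); pose proof (Rmin_r d2 1); lra).
  set (Sp := rsum N (fun i => rsum N (fun j =>
        A i j * (- sin (theta K i - theta K j) * (dtheta K i - dtheta K j))))).
  exists (/ D * Sp). split.
  { apply r_deriv. intros; apply Hdiff; auto. }
  assert (Hkey := key_K N A omega K (theta K) (dtheta K) (lambda2 K) (v2 K) HA
     ltac:(lra) (Hsteady K HK) (Hstable K HK)
     (fun i Hi => steady_deriv N A omega theta dtheta Kc2 K0 K i HK Hi
        (fun j Hj => Hdiff K j HK Hj) Hsteady)
     (Hl2eig K HK) (Hv2unit K HK)).
  fold Sp in Hkey.
  pose proof (Hv K HK HKd1) as Hcv.
  pose proof (Hl K HK HKd2) as Hlam.
  pose proof (Hl2neg K HK) as Hneg.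
  rewrite Rabs_left in Hlam by auto.
  set (x := dot N (v2 K) omega) in *.
  set (lam := lambda2 K) in *.
  assert (Hc2 : c * c <= x * x).
  { pose proof (Rabs_pos x). assert (Rabs x * Rabs x = x * x) by (rewrite <- Rabs_mult; apply Rabs_right; nra).
    nra. }
  assert (HK2 : K * K < B) by (unfold B; nra).
  assert (HQ : 0 < K * K * - lam) by (apply Rmult_lt_0_compat; nra).
  assert (HSp : 0 < Sp) by nra.
  assert (H1 : c * c < B * eps * (Sp / 2)).
  { apply Rle_lt_trans with (K * K * - lam * (Sp / 2)); [lra|].
    apply Rmult_lt_compat_r; [lra|].
    assert (0 < K * K) by nra. nra. }
  assert (HM : 0 < Rabs M + 1) by (pose proof (Rabs_pos M); lra).
  assert (E : B * eps * (Sp / 2) = c * c * (Sp / (D * (Rabs M + 1)))).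
  { unfold eps. field. split; lra. }
  rewrite E in H1.
  assert (Hcc : 0 < c * c) by nra.
  assert (H2 : 1 < Sp / (D * (Rabs M + 1))) by nra.
  assert (H3 : D * (Rabs M + 1) < Sp).
  { apply Rmult_lt_compat_r with (r := D * (Rabs M + 1)) in H2; [|nra].
    replace (Sp / (D * (Rabs M + 1)) * (D * (Rabs M + 1))) with Sp in H2 by (field; lra). lra. }
  assert (H4 : Rabs M + 1 < / D * Sp).
  { apply Rmult_lt_reg_l with D; auto. rewrite <- Rmult_assoc, Rinv_r by lra. lra. }
  pose proof (Rle_abs M). lra.
Qed.
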